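(* There is a functor $\mathrm{Coll}:\mathbf{OpCat}\to\mathbf{SkewMonCat}$ sending an operadic category $\mathcal C$ to the skew monoidal category $\mathrm{Coll}_{\mathcal C}(\mathbf{Set})$. Moreover, an operadic category $\mathcal C$ is a genuine operadic category if and only if the left unit constraint $\lambda$ of $\mathrm{Coll}_{\mathcal C}(\mathbf{Set})$ is invertible.
   Context: Operadic categories: $\mathcal S$ is a skeleton of finite sets (objects $\mathbb N$), with fixed equivalences $R_I:\mathcal S/I\to\mathcal S^I$ sending $f:J\to I$ to its fibres. An operadic category is a category $\mathcal C$ with a functor $|\cdot|:\mathcal C\to\mathcal S$ and functors $R_c:\mathcal C/c\to\mathcal C^{|c|}$ with $|\cdot|^{|c|}\circ R_c=R_{|c|}\circ(|\cdot|/c)$; the fibre $\psi^{-1}i$ of $\psi:c\to d$ at $i\in|d|$ is the $i$-th component of $R_d(\psi)$; for $\varphi:b\to c,\psi:c\to d$, $\varphi^\psi=R_d(\varphi:\psi\varphi\to\psi)$ with components $\varphi^\psi_j:(\psi\varphi)^{-1}j\to\psi^{-1}j$; $u$ is trivial if $|u|=1$ and $R_u=\mathrm{dom}$. Axioms: fibres of identities are trivial; double slice condition: for $\psi:c\to d$, $R_c\circ(\mathrm{dom}/\psi)=(\cong)\circ(\prod_jR_{\psi^{-1}j})\circ(R_d/\psi)$ as functors $(\mathcal C/d)/\psi\to\mathcal C^{|c|}$, via $\mathcal C^{|d|}/R_d\psi\cong\prod_j\mathcal C/\psi^{-1}j$ and $|c|\cong\sum_j|\psi|^{-1}j$. A strict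 operadic functor $F:\mathcal C\to\mathcal D$ is a functor with $|F(-)|=|-|$ and $R_{Fc}\circ(F/c)=F^{|c|}\circ R_c$ for all $c$. $\mathbf{OpCat}$ is the category of operadic categories and strict operadic functors. An operadic category is genuine if each connected component contains exactly one trivial object and that object is terminal in the component. $\mathrm{Coll}_{\mathcal C}(\mathbf{Set})$: with $C$ the object set of $\mathcal C$, the underlying category is $\mathbf{Set}/C$ (objects $\partial:X\to C$, $X_c=\partial^{-1}c$); $(X*Y)_c=\sum_{\varphi:c\to d}X_d\times\prod_{i\in|d|}Y_{\varphi^{-1}i}$ (elements $(x,\varphi,y)$); unit $U$ = set of trivial objects; $\alpha(x,\psi,y,\varphi,z)=(x,\psi\varphi,y,\varphi^\psi,z)$, $\lambda(u,\varphi,x)=x$, $\rho(x)=(x,1_{\partial x},(1_{\partial x}^{-1}i)_i)$. This is a skew monoidal category: a category with tensor $*$, unit $U$, and natural maps $\alpha:(X*Y)*Z\to X*(Y*Z)$, $\lambda:U*X\to X$, $\rho:X\to X*U$ (not necessarily invertible) satisfying the five coherence axioms $\lambda_U\rho_U=1$, $\lambda\alpha=\lambda*1$, $\alpha\rho=1*\rho$, $(1*\lambda)\alpha(\rho*1)=1$, and the pentagon. $\mathbf{SkewMonCat}$ has skew monoidal categories as objects and opmonoidal functors as morphisms: an opmonoidal functor $(\mathcal E,*,U)\to(\mathcal F,*,V)$ is a functor $F$ with natural $F^2:F(X*Y)\to FX*FY$ and $F^0:FU\to V$ such that $\alpha\circ(F^2*1)\circ F^2=(1*F^2)\circ F^2\circ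 F\alpha$, $\lambda\circ(F^0*1)\circ F^2=F\lambda$, and $(1*F^0)\circ F^2\circ F\rho=\rho$. *)

(* Defs.v *)
From HB Require Import structures.
From mathcomp Require Import all_boot.

Set Implicit Arguments.
Unset Strict Implicit.
Unset Printing Implicit Defensive.

(* The skeleton S of finite sets: objects are n : nat (= {0,..,n-1}); a     *)
(* morphism m -> n is represented by a function f : nat -> nat of which     *)
(* only the values on [0, m) matter (they lie in [0, n)).  The fixed        *)
(* equivalence R_I : S/I -> S^I sends f : J -> I to its fibres, each fibre   *)
(* f^{-1}(i) being identified with a finite ordinal ORDER-PRESERVINGLY.     *)

Definition sfib (f : nat -> nat) (m i : nat) : seq nat :=
  [seq j <- iota 0 m | f j == i].

(* position of j in its fibre f^{-1}(f j): this is the canonical bijection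
   m = sum_i |f^{-1}(i)| *)
Definition spos (f : nat -> nat) (m j : nat) : nat := index j (sfib f m (f j)).

(* Operadic categories.  A category is presented by its set of objects and  *)
(* its set of arrows with dom/cod, identities and composition (comp g f is  *)
(* g o f; it is only meaningful when cod f = dom g).                        *)
(*   ar c        = |c|                                                      *)
(*   am f        = |f| : |dom f| -> |cod f|                                 *)
(*   fib psi i   = psi^{-1} i      (i-th component of R_d(psi))             *)
(*   fibm psi phi i = phi^psi_i : (psi phi)^{-1} i -> psi^{-1} i            *)
(*                  (i-th component of R_d(phi : psi phi -> psi))           *)

Record OpCatData := {
  Ob : Type;
  Arr : Type;
  dom : Arr -> Ob;
  cod : Arr -> Ob;
  idA : Ob -> Arr;
  comp : Arr -> Arr -> Arr;
  ar : Ob -> nat;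
  am : Arr -> nat -> nat;
  fib : Arr -> nat -> Ob;
  fibm : Arr -> Arr -> nat -> Arr
}.

Section OpCatAxioms.
Variable C : OpCatData.

(* u is trivial: |u| = 1 and R_u = dom *)
Definition is_trivial (u : Ob C) : Prop :=
  ar u = 1 /\
  (forall psi : Arr C, cod psi = u -> fib psi 0 = dom psi) /\
  (forall psi phi : Arr C, cod psi = u -> cod phi = dom psi -> fibm psi phi 0 = phi).

Record is_opcat : Prop := {
  ax_dom_id : forall c : Ob C, dom (idA c) = c;
  ax_cod_id : forall c : Ob C, cod (idA c) = c;
  ax_dom_comp : forall (g : Arr C) f, cod f = dom g -> dom (comp g f) = dom f;
  ax_cod_comp : forall (g : Arr C) f, cod f = dom g -> cod (comp g f) = cod g;
  ax_comp_id_r : forall f : Arr C, comp f (idA (dom f)) = f;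
  ax_comp_id_l : forall f : Arr C, comp (idA (cod f)) f = f;
  ax_comp_assoc : forall (h g : Arr C) f, cod f = dom g -> cod g = dom h ->
      comp h (comp g f) = comp (comp h g) f;
  ax_am_range : forall (f : Arr C) j, j < ar (dom f) -> am f j < ar (cod f);
  ax_am_id : forall (c : Ob C) j, j < ar c -> am (idA c) j = j;
  ax_am_comp : forall (g f : Arr C) j, cod f = dom g -> j < ar (dom f) ->
      am (comp g f) j = am g (am f j);
  (* R_d : C/d -> C^{|d|} is a functor *)
  ax_dom_fibm : forall (psi phi : Arr C) i, cod phi = dom psi -> i < ar (cod psi) ->
      dom (fibm psi phi i) = fib (comp psi phi) i;
  ax_cod_fibm : forall (psi phi : Arr C) i, cod phi = dom psi -> i < ar (cod psi) ->
      cod (fibm psi phi i) = fib psi i;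
  ax_fibm_id : forall (psi : Arr C) i, i < ar (cod psi) ->
      fibm psi (idA (dom psi)) i = idA (fib psi i);
  ax_fibm_comp : forall (psi phi chi : Arr C) i,
      cod phi = dom psi -> cod chi = dom phi -> i < ar (cod psi) ->
      fibm psi (comp phi chi) i = comp (fibm psi phi i) (fibm (comp psi phi) chi i);
  (* |.|^{|d|} o R_d = R_{|d|} o (|.|/d) *)
  ax_ar_fib : forall (psi : Arr C) i, i < ar (cod psi) ->
      ar (fib psi i) = size (sfib (am psi) (ar (dom psi)) i);
  ax_am_fibm : forall (psi phi : Arr C) i k, cod phi = dom psi -> i < ar (cod psi) ->
      k < ar (fib (comp psi phi) i) ->
      am (fibm psi phi i) k =
      index (am phi (nth 0 (sfib (am (comp psi phi)) (ar (dom phi)) i) k))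
            (sfib (am psi) (ar (dom psi)) i);
  ax_fib_id_trivial : forall (c : Ob C) i, i < ar c -> is_trivial (fib (idA c) i);
  (* double slice condition, on objects of (C/d)/psi ... *)
  ax_ds_ob : forall (psi phi : Arr C) j, cod phi = dom psi -> j < ar (dom psi) ->
      fib phi j = fib (fibm psi phi (am psi j)) (spos (am psi) (ar (dom psi)) j);
  (* ... and on morphisms sigma : phi sigma -> phi of (C/d)/psi *)
  ax_ds_mor : forall (psi phi sigma : Arr C) j,
      cod phi = dom psi -> cod sigma = dom phi -> j < ar (dom psi) ->
      fibm phi sigma j =
      fibm (fibm psi phi (am psi j)) (fibm (comp psi phi) sigma (am psi j))
           (spos (am psi) (ar (dom psi)) j)
}.

Inductive connected : Ob C -> Ob C -> Prop :=
  | conn_refl c : connected c c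
  | conn_arr f : connected (dom f) (cod f)
  | conn_sym a b : connected a b -> connected b a
  | conn_trans a b c : connected a b -> connected b c -> connected a c.

Definition genuine : Prop :=
  forall c : Ob C, exists u : Ob C,
    [/\ connected c u, is_trivial u,
        (forall u', connected c u' -> is_trivial u' -> u' = u) &
        (forall c', connected c' u -> exists! f : Arr C, dom f = c' /\ cod f = u)].

End OpCatAxioms.

Record OpCat := { ocd :> OpCatData; ocax : is_opcat ocd }.

Definition is_strict (C D : OpCatData) (Fo : Ob C -> Ob D) (Fa : Arr C -> Arr D)
  : Prop :=
  [/\ (forall f, dom (Fa f) = Fo (dom f) /\ cod (Fa f) = Fo (cod f)),
      (forall c, Fa (idA c) = idA (Fo c)),
      (forall g f, cod f = dom g -> Fa (comp g f) = comp (Fa g) (Fa f)),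
      (forall c, ar (Fo c) = ar c) /\
      (forall f j, j < ar (dom f) -> am (Fa f) j = am f j) &
      (forall psi i, i < ar (cod psi) -> fib (Fa psi) i = Fo (fib psi i)) /\
      (forall psi phi i, cod phi = dom psi -> i < ar (cod psi) ->
          fibm (Fa psi) (Fa phi) i = Fa (fibm psi phi i))].

Record SOpFun (C D : OpCat) := {
  sfo : Ob C -> Ob D;
  sfa : Arr C -> Arr D;
  sfax : is_strict sfo sfa }.

Lemma idSF_ax (C : OpCat) : is_strict (fun c : Ob C => c) (fun f : Arr C => f).
Proof. by split. Qed.

Definition idSF (C : OpCat) : SOpFun C C := Build_SOpFun (idSF_ax C).

Lemma compSF_ax (C D E : OpCat) (G : SOpFun D E) (F : SOpFun C D) :
  is_strict (fun c => sfo G (sfo F c)) (fun f => sfa G (sfa F f)).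
Proof.
case: (sfax F) => Fdc Fid Fcomp [Far Fam] [Ffib Ffibm].
case: (sfax G) => Gdc Gid Gcomp [Gar Gam] [Gfib Gfibm].
split.
- by move=> f; case: (Fdc f) => d1 c1; case: (Gdc (sfa F f)) => d2 c2;
    rewrite d2 c2 d1 c1.
- by move=> c; rewrite Fid Gid.
- move=> g f e; rewrite Fcomp // Gcomp //.
  by case: (Fdc f) => _ ->; case: (Fdc g) => -> _; rewrite e.
- split; first by move=> c; rewrite Gar Far.
  move=> f j lt; rewrite Gam ?Fam //.
  by case: (Fdc f) => -> _; rewrite Far.
- split.
    move=> psi i lt; rewrite Gfib ?Ffib //.
    by case: (Fdc psi) => _ ->; rewrite Far.
  move=> psi phi i e lt; rewrite Gfibm ?Ffibm //.
  + by case: (Fdc psi) => -> _; case: (Fdc phi) => _ ->; rewrite e.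
  + by case: (Fdc psi) => _ ->; rewrite Far.
Qed.

Definition compSF (C D E : OpCat) (G : SOpFun D E) (F : SOpFun C D) : SOpFun C E :=
  Build_SOpFun (compSF_ax G F).

Record SkewData := {
  sObj : Type;
  sHom : sObj -> sObj -> Type;
  sid : forall X, sHom X X;
  scomp : forall X Y Z, sHom Y Z -> sHom X Y -> sHom X Z;
  sten : sObj -> sObj -> sObj;
  stenm : forall X X' Y Y', sHom X X' -> sHom Y Y' -> sHom (sten X Y) (sten X' Y');
  sU : sObj;
  salpha : forall X Y Z, sHom (sten (sten X Y) Z) (sten X (sten Y Z));
  slam : forall X, sHom (sten sU X) X;
  srho : forall X, sHom X (sten X sU)
}.

Arguments sid {s} X.
Arguments scomp {s X Y Z} g f.
Arguments sten {s} X Y.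
Arguments stenm {s X X' Y Y'} f g.
Arguments sU {s}.
Arguments salpha {s} X Y Z.
Arguments slam {s} X.
Arguments srho {s} X.

Record is_skew_monoidal (S : SkewData) : Prop := {
  sk_id_r : forall (X Y : sObj S) (f : sHom X Y), scomp f (sid X) = f;
  sk_id_l : forall (X Y : sObj S) (f : sHom X Y), scomp (sid Y) f = f;
  sk_assoc : forall (X Y Z W : sObj S) (f : sHom X Y) (g : sHom Y Z) (h : sHom Z W),
      scomp h (scomp g f) = scomp (scomp h g) f;
  sk_ten_id : forall X Y : sObj S, stenm (sid X) (sid Y) = sid (sten X Y);
  sk_ten_comp : forall (X X' X'' Y Y' Y'' : sObj S) (f : sHom X X') (f' : sHom X' X'')
      (g : sHom Y Y') (g' : sHom Y' Y''),
      stenm (scomp f' f) (scomp g' g) = scomp (stenm f' g') (stenm f g);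
  sk_alpha_nat : forall (X X' Y Y' Z Z' : sObj S) (f : sHom X X') (g : sHom Y Y') (h : sHom Z Z'),
      scomp (stenm f (stenm g h)) (salpha X Y Z)
      = scomp (salpha X' Y' Z') (stenm (stenm f g) h);
  sk_lam_nat : forall (X Y : sObj S) (f : sHom X Y),
      scomp f (slam X) = scomp (slam Y) (stenm (sid sU) f);
  sk_rho_nat : forall (X Y : sObj S) (f : sHom X Y),
      scomp (srho Y) f = scomp (stenm f (sid sU)) (srho X);
  sk_lam_rho : scomp (slam sU) (srho sU) = sid (@sU S);
  sk_lam_alpha : forall Y Z : sObj S,
      scomp (slam (sten Y Z)) (salpha sU Y Z) = stenm (slam Y) (sid Z);
  sk_alpha_rho : forall X Y : sObj S,
      scomp (salpha X Y sU) (srho (sten X Y)) = stenm (sid X) (srho Y);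
  sk_triangle : forall X Y : sObj S,
      scomp (stenm (sid X) (slam Y)) (scomp (salpha X sU Y) (stenm (srho X) (sid Y)))
      = sid (sten X Y);
  sk_pentagon : forall W X Y Z : sObj S,
      scomp (salpha W X (sten Y Z)) (salpha (sten W X) Y Z)
      = scomp (stenm (sid W) (salpha X Y Z))
          (scomp (salpha W (sten X Y) Z) (stenm (salpha W X Y) (sid Z)))
}.

Record OpMonData (S T : SkewData) := {
  fo : sObj S -> sObj T;
  fm : forall X Y, sHom X Y -> sHom (fo X) (fo Y);
  f2 : forall X Y, sHom (fo (sten X Y)) (sten (fo X) (fo Y));
  f0 : sHom (fo sU) sU
}.

Arguments fm {S T} o {X Y} _.
Arguments f2 {S T} o X Y.
Arguments f0 {S T} o.

Record is_opmonoidal (S T : SkewData) (F : OpMonData S T) : Prop := {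
  om_id : forall X : sObj S, fm F (sid X) = sid (fo F X);
  om_comp : forall (X Y Z : sObj S) (f : sHom X Y) (g : sHom Y Z),
      fm F (scomp g f) = scomp (fm F g) (fm F f);
  om_f2_nat : forall (X X' Y Y' : sObj S) (f : sHom X X') (g : sHom Y Y'),
      scomp (f2 F X' Y') (fm F (stenm f g)) = scomp (stenm (fm F f) (fm F g)) (f2 F X Y);
  om_alpha : forall X Y Z : sObj S,
      scomp (salpha (fo F X) (fo F Y) (fo F Z))
        (scomp (stenm (f2 F X Y) (sid (fo F Z))) (f2 F (sten X Y) Z))
      = scomp (stenm (sid (fo F X)) (f2 F Y Z))
          (scomp (f2 F X (sten Y Z)) (fm F (salpha X Y Z)));
  om_lam : forall X : sObj S,
      scomp (slam (fo F X)) (scomp (stenm (f0 F) (sid (fo F X))) (f2 F sU X))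
      = fm F (slam X);
  om_rho : forall X : sObj S,
      scomp (stenm (sid (fo F X)) (f0 F)) (scomp (f2 F X sU) (fm F (srho X)))
      = srho (fo F X)
}.

Definition idOpMon (S : SkewData) : OpMonData S S :=
  {| fo := fun X => X; fm := fun X Y f => f;
     f2 := fun X Y => sid (sten X Y); f0 := sid sU |}.

Definition compOpMon (S T W : SkewData) (G : OpMonData T W) (F : OpMonData S T)
  : OpMonData S W :=
  {| fo := fun X => fo G (fo F X);
     fm := fun X Y f => fm G (fm F f);
     f2 := fun X Y => scomp (f2 G (fo F X) (fo F Y)) (fm G (f2 F X Y));
     f0 := scomp (f0 G) (fm G (f0 F)) |}.

Definition is_iso (S : SkewData) (X Y : sObj S) (f : sHom X Y) : Prop :=
  exists g : sHom Y X, scomp g f = sid X /\ scomp f g = sid Y.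

Definition lambda_invertible (S : SkewData) : Prop :=
  forall X : sObj S, is_iso (slam X).

(* objects of Set/C: a set X with a map d : X -> C (X_c = d^{-1} c) *)
Set Primitive Projections.
Record CObj (C : OpCatData) := CO { car : Type; bd : car -> Ob C }.
Record CHom (C : OpCatData) (X Y : CObj C) :=
  CH { hfun : car X -> car Y; hbd : forall x, @bd C Y (hfun x) = @bd C X x }.
Unset Primitive Projections.
Arguments CO {C} car bd.
Arguments car {C} c.
Arguments bd {C} c _.
Arguments CH {C X Y} hfun hbd.
Arguments hfun {C X Y} c _.
Arguments hbd {C X Y} c x.

(* an element (x, phi, y) of (X * Y)_c: phi : c -> d, x in X_d and
   y = (y_i)_{i in |d|} with y_i in Y_{phi^{-1} i}; its boundary is c = dom phi *)
Record TElt (C : OpCatData) (X Y : CObj C) := TE {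
  tx : car X;
  tphi : Arr C;
  ty : seq (car Y);
  tcod : @bd C X tx = cod tphi;
  tfib : map (@bd C Y) ty = mkseq (fib tphi) (ar (cod tphi)) }.
Arguments TE {C X Y} tx tphi ty tcod tfib.

Definition ten (C : OpCatData) (X Y : CObj C) : CObj C :=
  CO (TElt X Y) (fun t => dom (tphi t)).

Section Coll.
Variable C : OpCat.
Let A := ocax C.

Definition CidH (X : CObj C) : CHom X X := CH (fun x => x) (fun x => erefl).

Definition CcompH (X Y Z : CObj C) (g : CHom Y Z) (f : CHom X Y) : CHom X Z :=
  CH (fun x => hfun g (hfun f x)) (fun x => etrans (hbd g (hfun f x)) (hbd f x)).

Lemma tenm_fib (X X' Y Y' : CObj C) (f : CHom X X') (g : CHom Y Y') (t : TElt X Y) :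
  map (bd Y') (map (hfun g) (ty t)) = mkseq (fib (tphi t)) (ar (cod (tphi t))).
Proof. by rewrite -map_comp (eq_map (hbd g)) tfib. Qed.

Definition tenm_fun (X X' Y Y' : CObj C) (f : CHom X X') (g : CHom Y Y')
  (t : TElt X Y) : TElt X' Y' :=
  TE (hfun f (tx t)) (tphi t) (map (hfun g) (ty t))
     (etrans (hbd f (tx t)) (tcod t)) (tenm_fib f g t).

Definition tenm (X X' Y Y' : CObj C) (f : CHom X X') (g : CHom Y Y')
  : CHom (ten X Y) (ten X' Y') :=
  @CH C (ten X Y) (ten X' Y') (tenm_fun f g) (fun t => erefl).

Definition CU : CObj C := CO {u : Ob C | is_trivial u} (fun u => sval u).

(* lambda (u, phi, x) = x *)
Lemma lam_size (X : CObj C) (t : TElt CU X) : 0 < size (ty t).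
Proof.
have := congr1 size (tfib t); rewrite size_map size_mkseq => ->.
by case: (svalP (tx t)) => h _; rewrite -(tcod t) /= h.
Qed.

Definition lam_fun (X : CObj C) (t : TElt CU X) : car X :=
  tnth (in_tuple (ty t)) (Ordinal (lam_size t)).

Lemma lam_bd (X : CObj C) (t : TElt CU X) : bd X (lam_fun t) = dom (tphi t).
Proof.
have triv : is_trivial (cod (tphi t)) by rewrite -(tcod t); exact: svalP.
case: triv => h1 [h2 _].
rewrite /lam_fun (tnth_nth (lam_fun t)) /= -(h2 _ erefl).
rewrite -(nth_map _ (bd X (lam_fun t))) ?lam_size // tfib nth_mkseq //.
by rewrite h1.
Qed.

Definition lam (X : CObj C) : CHom (ten CU X) X := @CH C (ten CU X) X (@lam_fun X) (@lam_bd X).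

(* rho x = (x, 1, (1^{-1} i)_i) *)
Definition rho_seq (c : Ob C) : seq (car CU) :=
  map (fun i : 'I_(ar c) =>
         exist (fun u => is_trivial u) (fib (idA c) i) (ax_fib_id_trivial A (ltn_ord i)))
      (enum 'I_(ar c)).

Lemma rho_cod (X : CObj C) (x : car X) : bd X x = cod (idA (bd X x)).
Proof. by rewrite ax_cod_id. Qed.

Lemma rho_fib (c : Ob C) :
  map (bd CU) (rho_seq c) = mkseq (fib (idA c)) (ar (cod (idA c))).
Proof.
rewrite /rho_seq -map_comp ax_cod_id // /mkseq -val_enum_ord -map_comp.
by apply: eq_map.
Qed.

Definition rho_fun (X : CObj C) (x : car X) : TElt X CU :=
  TE x (idA (bd X x)) (rho_seq (bd X x)) (rho_cod x) (rho_fib (bd X x)).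

Definition rho (X : CObj C) : CHom X (ten X CU) :=
  @CH C X (ten X CU) (@rho_fun X) (fun x => ax_dom_id A (bd X x)).

(* alpha (x, psi, y, phi, z) = (x, psi phi, y, phi^psi, z) *)
Section Alpha.
Variables X Y Z : CObj C.
Variable t : TElt (ten X Y) Z.
Let s := tx t.
Let psi := tphi s.
Let phi := tphi t.
Let y := ty s.
Let z := ty t.

Lemma al_e : cod phi = dom psi.
Proof. by rewrite -(tcod t). Qed.

Lemma al_size_y : size y = ar (cod psi).
Proof. by have := congr1 size (tfib s); rewrite size_map size_mkseq. Qed.

Lemma al_size_z : size z = ar (dom psi).
Proof.
by have := congr1 size (tfib t); rewrite size_map size_mkseq -al_e.
Qed.

(* the part of z lying over the fibre |psi|^{-1} i, in increasing order *)
Definition al_zmask (i : nat) : seq (car Z) :=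
  mask [seq am psi j == i | j <- iota 0 (size z)] z.

Lemma al_ar (i : 'I_(size y)) : i < ar (cod psi).
Proof. by rewrite -al_size_y. Qed.

Lemma al_q1 (i : 'I_(size y)) :
  bd Y (tnth (in_tuple y) i) = cod (fibm psi phi i).
Proof.
have lt := al_ar i.
rewrite (ax_cod_fibm A al_e lt) (tnth_nth (tnth (in_tuple y) i)) /=.
rewrite -(nth_map _ (bd Y (tnth (in_tuple y) i))) // /y tfib nth_mkseq //.
Qed.

Lemma al_fibs (i : nat) : i < ar (cod psi) ->
  map (fib phi) (sfib (am psi) (ar (dom psi)) i)
  = mkseq (fib (fibm psi phi i)) (ar (cod (fibm psi phi i))).
Proof.
move=> lt; rewrite (ax_cod_fibm A al_e lt) (ax_ar_fib A lt).
apply: (@eq_from_nth _ (fib phi 0)); first by rewrite size_map size_mkseq.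
move=> k; rewrite size_map => hk.
rewrite (nth_map 0) // nth_mkseq //.
set j := nth 0 _ k.
have jS : j \in sfib (am psi) (ar (dom psi)) i by exact: mem_nth.
move: (jS); rewrite mem_filter mem_iota add0n => /andP [/eqP hj /andP [_ jlt]].
rewrite (ax_ds_ob A al_e jlt) /spos hj index_uniq //.
by rewrite filter_uniq // iota_uniq.
Qed.

Lemma al_q2 (i : 'I_(size y)) :
  map (bd Z) (al_zmask i) = mkseq (fib (fibm psi phi i)) (ar (cod (fibm psi phi i))).
Proof.
have lt := al_ar i.
rewrite /al_zmask map_mask /z tfib -/phi -/z al_size_z al_e /mkseq.
rewrite -map_mask -filter_mask -/(sfib (am psi) (ar (dom psi)) i).
exact: al_fibs.
Qed.

Definition al_w : seq (car (ten Y Z)) :=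
  map (fun i : 'I_(size y) =>
         TE (tnth (in_tuple y) i) (fibm psi phi i) (al_zmask i) (al_q1 i) (al_q2 i))
      (enum 'I_(size y)).

Lemma al_cod : bd X (tx s) = cod (comp psi phi).
Proof. by rewrite (ax_cod_comp A al_e) (tcod s). Qed.

Lemma al_fib : map (bd (ten Y Z)) al_w = mkseq (fib (comp psi phi)) (ar (cod (comp psi phi))).
Proof.
rewrite /al_w -map_comp (ax_cod_comp A al_e) -al_size_y /mkseq -val_enum_ord -map_comp.
apply: eq_map => i /=.
exact: (ax_dom_fibm A al_e (al_ar i)).
Qed.

Definition alpha_fun : TElt X (ten Y Z) := TE (tx s) (comp psi phi) al_w al_cod al_fib.

Lemma alpha_bd : dom (tphi alpha_fun) = dom (tphi t).
Proof. exact: (ax_dom_comp A al_e). Qed.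

End Alpha.

Definition alpha (X Y Z : CObj C) : CHom (ten (ten X Y) Z) (ten X (ten Y Z)) :=
  @CH C (ten (ten X Y) Z) (ten X (ten Y Z)) (@alpha_fun X Y Z) (@alpha_bd X Y Z).

Definition Coll : SkewData :=
  {| sObj := CObj C; sHom := @CHom C; sid := CidH; scomp := CcompH;
     sten := @ten C; stenm := tenm; sU := CU;
     salpha := alpha; slam := lam; srho := rho |}.

End Coll.

(* Main.v *)
From Stdlib Require Import ProofIrrelevance FunctionalExtensionality IndefiniteDescription.
From mathcomp Require Import all_boot.
Require Import Defs.
Set Implicit Arguments.
Unset Strict Implicit.
Unset Printing Implicit Defensive.


Lemma eq_from_nth' (T : Type) (s1 s2 : seq T) :
  size s1 = size s2 -> (forall x0 i, i < size s1 -> nth x0 s1 i = nth x0 s2 i) -> s1 = s2.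
Proof.
case: s1 => [|a s1]; first by case: s2.
move=> hs h; exact: (eq_from_nth (x0:=a) hs (h a)).
Qed.

Lemma mask_iota (T : Type) (P : nat -> bool) (z : seq T) x0 :
  mask [seq P j | j <- iota 0 (size z)] z = map (nth x0 z) [seq j <- iota 0 (size z) | P j].
Proof.
elim: z P => [|a z IH] P //=.
rewrite -(addn0 1) iotaDl filter_map -map_comp IH.
by case: (P 0) => /=; rewrite -map_comp.
Qed.

Lemma sig_ext (T : Type) (P : T -> Prop) (a b : {x | P x}) : sval a = sval b -> a = b.
Proof.
case: a b => a pa [b pb] /= e; subst; f_equal; exact: proof_irrelevance.
Qed.

Lemma sfib_uniq f m i : uniq (sfib f m i).
Proof. by rewrite filter_uniq // iota_uniq. Qed.

Lemma mem_sfib f m i j : (j \in sfib f m i) = (j < m) && (f j == i).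
Proof. by rewrite mem_filter mem_iota add0n andbC. Qed.

Lemma sfib_id f m i : i < m -> (forall j, j < m -> f j = j) -> sfib f m i = [:: i].
Proof.
move=> lt h; rewrite /sfib (@eq_in_filter _ _ (pred1 i)).
  by rewrite filter_pred1_uniq ?iota_uniq // mem_iota.
by move=> j; rewrite mem_iota /= add0n => jl; rewrite h.
Qed.

Lemma sfib_all f m : (forall j, j < m -> f j = 0) -> sfib f m 0 = iota 0 m.
Proof.
move=> h; rewrite /sfib; apply/all_filterP/allP => j; rewrite mem_iota => /andP [_ lt].
by rewrite h.
Qed.

Section Basic.
Variable C : OpCat.
Local Notation A := (ocax C).

Lemma CHom_ext (X Y : CObj C) (f g : CHom X Y) :
  (forall x, hfun f x = hfun g x) -> f = g.
Proof.
move: f g => [f hf] [g hg] /= /functional_extensionality E; subst.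
by rewrite (proof_irrelevance _ hf hg).
Qed.

Lemma TElt_ext (X Y : CObj C) (t1 t2 : TElt X Y) :
  tx t1 = tx t2 -> tphi t1 = tphi t2 -> ty t1 = ty t2 -> t1 = t2.
Proof.
case: t1 => x1 p1 y1 c1 f1; case: t2 => x2 p2 y2 c2 f2 /= e1 e2 e3; subst.
by rewrite (proof_irrelevance _ c1 c2) (proof_irrelevance _ f1 f2).
Qed.

Lemma size_ty (X Y : CObj C) (t : TElt X Y) : size (ty t) = ar (cod (tphi t)).
Proof. by have := congr1 size (tfib t); rewrite size_map size_mkseq. Qed.

Lemma bd_ty (X Y : CObj C) (t : TElt X Y) y0 i : i < size (ty t) ->
  bd Y (nth y0 (ty t) i) = fib (tphi t) i.
Proof.
move=> lt; rewrite -(nth_map _ (bd Y y0)) // tfib nth_mkseq //.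
by rewrite -size_ty.
Qed.

Lemma lam_nth (X : CObj C) (t : TElt (CU C) X) x0 : lam_fun t = nth x0 (ty t) 0.
Proof. by rewrite /lam_fun (tnth_nth x0). Qed.

Lemma rho_sval (c : Ob C) : map sval (rho_seq c) = mkseq (fib (idA c)) (ar c).
Proof. by have := rho_fib c; rewrite ax_cod_id //; exact: ocax. Qed.

Lemma CU_list_ext (s1 s2 : seq (car (CU C))) : map sval s1 = map sval s2 -> s1 = s2.
Proof. apply: inj_map => a b; exact: sig_ext. Qed.

Lemma triv_fib_id (u : Ob C) : is_trivial u -> fib (idA u) 0 = u.
Proof.
case=> _ [h _]; rewrite h ?ax_dom_id ?ax_cod_id //; exact: ocax.
Qed.

Lemma size_al_w (X Y Z : CObj C) (t : TElt (ten X Y) Z) : size (al_w t) = size (ty (tx t)).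
Proof. by rewrite /al_w size_map size_enum_ord. Qed.

Lemma al_zmaskE (X Y Z : CObj C) (t : TElt (ten X Y) Z) z0 i :
  al_zmask t i = map (nth z0 (ty t)) (sfib (am (tphi (tx t))) (ar (dom (tphi (tx t)))) i).
Proof. by rewrite /al_zmask (mask_iota _ _ z0) (al_size_z t). Qed.

Lemma size_al_zmask (X Y Z : CObj C) (t : TElt (ten X Y) Z) i :
  size (al_zmask t i) = size (sfib (am (tphi (tx t))) (ar (dom (tphi (tx t)))) i).
Proof.
rewrite /al_zmask size_mask ?size_map ?size_iota // count_map size_filter (al_size_z t).
by [].
Qed.

Lemma al_w_nth (X Y Z : CObj C) (t : TElt (ten X Y) Z) w0 y0 i :
  i < size (ty (tx t)) ->
  [/\ tx (nth w0 (al_w t) i) = nth y0 (ty (tx t)) i,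
      tphi (nth w0 (al_w t) i) = fibm (tphi (tx t)) (tphi t) i &
      ty (nth w0 (al_w t) i) = al_zmask t i].
Proof.
move=> lt; rewrite /al_w (nth_map (Ordinal lt)) ?size_enum_ord //=.
by rewrite (tnth_nth y0) /= nth_enum_ord.
Qed.

End Basic.

Definition ex_elem T (s : seq T) i (lt : i < size s) : T :=
  match s return i < size s -> T with [::] => fun l => False_rect _ (notF l) | a :: _ => fun _ => a end lt.

Section Basic2.
Variable C : OpCat.
Lemma size_rho (c : Ob C) : size (rho_seq c) = ar c.
Proof. by have := congr1 size (rho_sval c); rewrite size_map size_mkseq. Qed.

Lemma nth_rho (c : Ob C) u0 i : i < ar c -> sval (nth u0 (rho_seq c) i) = fib (idA c) i.
Proof.
move=> lt; rewrite -(nth_map u0 (sval u0)) ?size_rho // rho_sval nth_mkseq //.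
Qed.
End Basic2.

Lemma sfib_nth f m i k : k < size (sfib f m i) ->
  [/\ nth 0 (sfib f m i) k < m, f (nth 0 (sfib f m i) k) = i &
      index (nth 0 (sfib f m i) k) (sfib f m i) = k].
Proof.
move=> lt; have := mem_nth 0 lt; rewrite mem_sfib => /andP [h1 /eqP h2].
by split => //; rewrite index_uniq // sfib_uniq.
Qed.

Lemma sfib_compose (f1 f2 g h : nat -> nat) na n k l :
  (forall j, j < n -> g j = f1 (f2 j)) -> (forall j, j < n -> f2 j < na) ->
  (forall m, m < size (sfib g n k) -> h m = index (f2 (nth 0 (sfib g n k) m)) (sfib f1 na k)) ->
  l < size (sfib f1 na k) ->
  map (nth 0 (sfib g n k)) (sfib h (size (sfib g n k)) l) = sfib f2 n (nth 0 (sfib f1 na k) l).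
Proof.
move=> hg hr hh hl.
rewrite /sfib -/(sfib g n k) -/(sfib f1 na k).
rewrite (@eq_in_filter _ _ (preim (nth 0 (sfib g n k))
           (fun j => index (f2 j) (sfib f1 na k) == l))); last first.
  by move=> m; rewrite mem_iota add0n /= => lt; rewrite hh.
rewrite -filter_map -/(mkseq _ _) mkseq_nth /sfib -filter_predI.
apply: eq_in_filter => j; rewrite mem_iota add0n /= => jl.
rewrite hg //; have xl := hr j jl; move: (f2 j) xl => x xl.
have [h1 h2 h3] := sfib_nth hl.
apply/andP/eqP => [[/eqP hi /eqP hk]|->]; last by rewrite h2 h3.
have xF : x \in sfib f1 na k by rewrite mem_sfib xl hk eqxx.
by rewrite -hi nth_index.
Qed.


Section Skew.
Variable C : OpCat.
Local Notation A := (ocax C).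

Lemma alpha_nat_list (X X' Y Y' Z Z' : CObj C) (f : CHom X X') (g : CHom Y Y') (h : CHom Z Z')
  (t : TElt (ten X Y) Z) :
  [seq tenm_fun g h i | i <- al_w t] = al_w (tenm_fun (tenm f g) h t).
Proof.
apply: eq_from_nth' => [|x0 i]; first by rewrite size_map !size_al_w /= size_map.
rewrite size_map size_al_w => lt.
have lt1 : i < size (al_w t) by rewrite size_al_w.
have w0 := ex_elem lt1.
have y0 := ex_elem lt.
rewrite (nth_map w0) //.
have [e1 e2 e3] := al_w_nth w0 y0 lt.
have lt' : i < size (ty (tx (tenm_fun (tenm f g) h t))) by rewrite /= size_map.
have [f1 f2 f3] := al_w_nth x0 (hfun g y0) lt'.
apply: TElt_ext => /=.
- by rewrite e1 f1 /= (nth_map y0).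
- by rewrite e2 f2.
- by rewrite e3 f3 /al_zmask /= size_map map_mask.
Qed.

Lemma pentagon_elt (W X Y Z : CObj C) (t : TElt (ten (ten W X) Y) Z) :
  alpha_fun (alpha_fun t) =
  tenm_fun (CidH W) (alpha X Y Z) (alpha_fun (tenm_fun (alpha W X Y) (CidH Z) t)).
Proof.
have e3 : cod (tphi t) = dom (tphi (tx t)) := al_e t.
have e2 : cod (tphi (tx t)) = dom (tphi (tx (tx t))) := al_e (tx t).
apply: TElt_ext => //=.
  by rewrite (ax_comp_assoc A e3 e2).
apply: eq_from_nth' => [|w0 k].
  by rewrite size_map !size_al_w.
rewrite size_al_w /= => lk.
have x0 := ex_elem lk.
have [a1 a2 a3] := al_w_nth (t:=alpha_fun t) w0 x0 lk.
set t2 := tenm_fun (alpha W X Y) (CidH Z) t.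
have lk2 : k < size (ty (tx t2)) by rewrite /= size_al_w.
have lk2' : k < size (al_w t2) by rewrite size_al_w.
have m0 := ex_elem lk2'.
rewrite (nth_map m0) //.
have n0 := ex_elem lk2.
have [b1 b2 b3] := al_w_nth m0 n0 lk2.
have [c1 c2 c3] := al_w_nth (t:=tx t) n0 x0 lk.
have hk : k < ar (cod (tphi (tx (tx t)))) by rewrite -size_ty.
apply: TElt_ext => /=.
- by rewrite a1 b1 c1.
- by rewrite a2 b1 c2 b2 (ax_fibm_comp A e2 e3 hk).
rewrite a3; apply: eq_from_nth' => [|v0 l].
  by rewrite size_al_w b1 c3 (size_al_zmask (alpha_fun t)) size_al_zmask.
rewrite (size_al_zmask (alpha_fun t)) /= => ll.
have [h1 h2 h3] := sfib_nth ll.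
rewrite (al_zmaskE (alpha_fun t) v0) /= (nth_map 0) //.
have li : nth 0 (sfib (am (tphi (tx (tx t)))) (ar (dom (tphi (tx (tx t))))) k) l
          < size (ty (tx t)) by rewrite size_ty e2.
have y0 := ex_elem li.
have [d1 d2 d3] := al_w_nth v0 y0 li.
have lM : l < size (ty (tx (nth m0 (al_w t2) k))) by rewrite b1 c3 size_al_zmask.
have [g1 g2 g3] := al_w_nth v0 y0 lM.
apply: TElt_ext.
- by rewrite d1 g1 b1 c3 (al_zmaskE _ y0) (nth_map 0).
- by rewrite d2 g2 b1 c2 b2 (ax_ds_mor A e2 e3 h1) /spos h2 h3.
rewrite d3 g3.
have [lz|] := boolP (0 < size (ty t)); last first.
  rewrite -eqn0Ngt => /eqP /size0nil E.
  by rewrite /al_zmask b3 /al_zmask /= E.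
have z0 := ex_elem lz.
rewrite (al_zmaskE _ z0) (al_zmaskE _ z0) b3 (al_zmaskE _ z0) /= map_id b1 c2.
have hk' : k < ar (cod (comp (tphi (tx (tx t))) (tphi (tx t)))) by rewrite (ax_cod_comp A e2).
rewrite (ax_dom_fibm A e2 hk) (ax_ar_fib A hk') (ax_dom_comp A e2).
rewrite -(@sfib_compose (am (tphi (tx (tx t)))) (am (tphi (tx t)))
            (am (comp (tphi (tx (tx t))) (tphi (tx t))))
            (am (fibm (tphi (tx (tx t))) (tphi (tx t)) k))) //.
- rewrite -map_comp; apply/eq_in_map => m; rewrite mem_sfib => /andP [lm _] /=.
  by rewrite (nth_map 0).
- by move=> j jl; rewrite (ax_am_comp A e2).
- by move=> j jl; rewrite -e2; apply: (ax_am_range A).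
- move=> m lm; rewrite (ax_am_fibm A e2 hk) //.
  by rewrite (ax_ar_fib A hk') (ax_dom_comp A e2).
Qed.

Lemma skew_Coll : is_skew_monoidal (Coll C).
Proof.
constructor.
- by move=> X Y f; apply: CHom_ext.
- by move=> X Y f; apply: CHom_ext.
- by move=> X Y Z W f g h; apply: CHom_ext.
- move=> X Y; apply: CHom_ext => t /=; apply: TElt_ext => //=; exact: map_id.
- move=> X X' X'' Y Y' Y'' f f' g g'; apply: CHom_ext => t /=; apply: TElt_ext => //=.
  by rewrite -map_comp.
- move=> X X' Y Y' Z Z' f g h; apply: CHom_ext => t /=; apply: TElt_ext => //=.
  exact: alpha_nat_list.
- move=> X Y f; apply: CHom_ext => t /=.
  have x0 := lam_fun t.
  by rewrite (lam_nth t x0) (lam_nth _ (hfun f x0)) /= (nth_map x0) // (lam_size t).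
- move=> X Y f; apply: CHom_ext => x /=; apply: TElt_ext => //=.
  + by rewrite (hbd f x).
  + by rewrite map_id (hbd f x).
- apply: CHom_ext => u /=.
  rewrite (lam_nth _ u) /=; apply: sig_ext; rewrite nth_rho.
    by apply: triv_fib_id; exact: svalP.
  by case: (svalP u) => ->.
- move=> Y Z; apply: CHom_ext => t /=.
  have tr : is_trivial (cod (tphi (tx t))) by rewrite -(tcod (tx t)); exact: svalP.
  have lt : 0 < size (ty (tx t)) by rewrite size_ty; case: tr => ->.
  have w0 := lam_fun (alpha_fun t).
  have y0 := ex_elem lt.
  rewrite (lam_nth _ w0) /=.
  have [e1 e2 e3] := al_w_nth w0 y0 lt.
  apply: TElt_ext => /=.
  + by rewrite e1 (lam_nth _ y0).
  + by rewrite e2; case: tr => _ [_ ->] //; exact: al_e.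
  + rewrite e3 map_id.
    have [lt0|] := boolP (0 < size (ty t)).
      have z0 := ex_elem lt0; rewrite (al_zmaskE _ z0) sfib_all.
        by rewrite -(al_size_z t); exact: mkseq_nth.
      move=> j lt'; have := ax_am_range A lt'; case: tr => -> _.
      by rewrite ltnS leqn0 => /eqP.
    rewrite -eqn0Ngt => /eqP /size0nil E.
    by rewrite /al_zmask E.
- move=> X Y; apply: CHom_ext => t /=; apply: TElt_ext => //=.
    by rewrite (ax_comp_id_r A).
  apply: eq_from_nth' => [|x0 i]; first by rewrite size_al_w size_map.
  rewrite size_al_w /= => lt.
  have lt1 : i < size (al_w (rho_fun t)) by rewrite size_al_w.
  have w0 := ex_elem lt1.
  have y0 := ex_elem lt.
  have [e1 e2 e3] := al_w_nth (t:=rho_fun t) w0 y0 lt.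
  have lti : i < ar (cod (tphi t)) by rewrite -size_ty.
  rewrite (nth_map y0) //; apply: TElt_ext => /=.
  + by rewrite (set_nth_default w0) ?size_al_w // e1.
  + by rewrite (set_nth_default w0) ?size_al_w // e2 /= bd_ty // (ax_fibm_id A).
  rewrite (set_nth_default w0) ?size_al_w // e3 bd_ty //.
  apply: CU_list_ext; rewrite rho_sval /al_zmask map_mask rho_sval /=.
  have E : size (rho_seq (dom (tphi t))) =
           size (mkseq (fib (idA (dom (tphi t)))) (ar (dom (tphi t)))).
    by rewrite size_rho size_mkseq.
  rewrite E (mask_iota _ _ (dom (tphi t))) size_mkseq -/(sfib _ _ _).
  apply: (@eq_from_nth _ (dom (tphi t))); first by rewrite size_map size_mkseq (ax_ar_fib A).
  move=> k; rewrite size_map => ltk.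
  have [h1 h2 h3] := sfib_nth ltk.
  rewrite (nth_map 0) // nth_mkseq // nth_mkseq; last by rewrite (ax_ar_fib A).
  rewrite (ax_ds_ob A (psi:=tphi t) (phi:=idA (dom (tphi t)))) ?(ax_cod_id A) //.
  by rewrite /spos h2 h3 (ax_fibm_id A).
- move=> X Y; apply: CHom_ext => t /=; apply: TElt_ext => //=.
    by rewrite (tcod t) (ax_comp_id_l A).
  apply: eq_from_nth' => [|x0 i].
    by rewrite size_map size_al_w /= size_rho (tcod t) size_ty.
  rewrite size_map => lt1.
  have w0 := ex_elem lt1.
  move: (lt1); rewrite size_al_w => lt.
  rewrite (nth_map w0) // (lam_nth _ x0).
  have [e1 e2 e3] := al_w_nth w0 (ex_elem lt) lt.
  rewrite e3 (al_zmaskE _ x0) /= (ax_dom_id A) sfib_id //=.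
  + by rewrite map_id.
  + by move: (lt); rewrite size_rho.
  + by move=> j jl; rewrite (ax_am_id A).
- move=> W X Y Z; apply: CHom_ext => t /=.
  exact: pentagon_elt.
Qed.
End Skew.


Section SF.
Variables (C D : OpCat) (F : SOpFun C D).
Local Notation Fo := (sfo F).
Local Notation Fa := (sfa F).

Lemma SF_dom f : dom (Fa f) = Fo (dom f).
Proof. by case: (sfax F) => h _ _ _ _; case: (h f). Qed.
Lemma SF_cod f : cod (Fa f) = Fo (cod f).
Proof. by case: (sfax F) => h _ _ _ _; case: (h f). Qed.
Lemma SF_id c : Fa (idA c) = idA (Fo c).
Proof. by case: (sfax F). Qed.
Lemma SF_comp g f : cod f = dom g -> Fa (comp g f) = comp (Fa g) (Fa f).
Proof. by case: (sfax F) => _ _ h _ _; apply: h. Qed.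
Lemma SF_ar c : ar (Fo c) = ar c.
Proof. by case: (sfax F) => _ _ _ [h _] _. Qed.
Lemma SF_am f j : j < ar (dom f) -> am (Fa f) j = am f j.
Proof. by case: (sfax F) => _ _ _ [_ h] _; apply: h. Qed.
Lemma SF_fib psi i : i < ar (cod psi) -> fib (Fa psi) i = Fo (fib psi i).
Proof. by case: (sfax F) => _ _ _ _ [h _]; apply: h. Qed.
Lemma SF_fibm psi phi i : cod phi = dom psi -> i < ar (cod psi) ->
  fibm (Fa psi) (Fa phi) i = Fa (fibm psi phi i).
Proof. by case: (sfax F) => _ _ _ _ [_ h]; apply: h. Qed.

Definition CFo (X : CObj C) : CObj D := CO (car X) (fun x => Fo (bd X x)).
Definition CFm (X Y : CObj C) (f : CHom X Y) : CHom (CFo X) (CFo Y) :=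
  @CH D (CFo X) (CFo Y) (hfun f) (fun x => f_equal Fo (hbd f x)).

Lemma CF2_cod (X Y : CObj C) (t : TElt X Y) : bd (CFo X) (tx t) = cod (Fa (tphi t)).
Proof. by rewrite SF_cod /= (tcod t). Qed.

Lemma CF2_fib (X Y : CObj C) (t : TElt X Y) :
  map (bd (CFo Y)) (ty t) = mkseq (fib (Fa (tphi t))) (ar (cod (Fa (tphi t)))).
Proof.
rewrite SF_cod SF_ar /=.
have -> : map (fun y => Fo (bd Y y)) (ty t) = map Fo (map (bd Y) (ty t)) by rewrite -map_comp.
rewrite tfib /mkseq -map_comp; apply/eq_in_map => i; rewrite mem_iota add0n /= => lt.
by rewrite SF_fib.
Qed.

Definition CF2_fun (X Y : CObj C) (t : TElt X Y) : TElt (CFo X) (CFo Y) :=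
  @TE D (CFo X) (CFo Y) (tx t) (Fa (tphi t)) (ty t) (CF2_cod t) (CF2_fib t).

Definition CF2 (X Y : CObj C) : CHom (CFo (ten X Y)) (ten (CFo X) (CFo Y)) :=
  @CH D (CFo (ten X Y)) (ten (CFo X) (CFo Y)) (@CF2_fun X Y) (fun t => SF_dom (tphi t)).

Lemma CF0_triv (u : car (CU C)) : is_trivial (Fo (sval u)).
Proof.
have tr := svalP u.
have e : Fo (sval u) = fib (idA (Fo (sval u))) 0.
  rewrite -SF_id SF_fib ?triv_fib_id //.
  by rewrite (ax_cod_id (ocax C)); case: tr => ->.
rewrite e; apply: (ax_fib_id_trivial (ocax D)).
by rewrite SF_ar; case: tr => ->.
Qed.

Definition CF0 : CHom (CFo (CU C)) (CU D) :=
  @CH D (CFo (CU C)) (CU D) (fun u => exist _ (Fo (sval u)) (CF0_triv u)) (fun u => erefl).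

Definition CollF : OpMonData (Coll C) (Coll D) :=
  @Build_OpMonData (Coll C) (Coll D) CFo CFm CF2 CF0.

Lemma om_alpha_list (X Y Z : CObj C) (t : TElt (ten X Y) Z) :
  al_w (tenm_fun (CF2 X Y) (CidH (CFo Z)) (CF2_fun t)) = map (@CF2_fun Y Z) (al_w t).
Proof.
have e := al_e t.
apply: eq_from_nth' => [|w0 i]; first by rewrite (size_map (@CF2_fun Y Z)) !size_al_w.
rewrite size_al_w /= => lt.
have lt1 : i < size (al_w t) by rewrite size_al_w.
have v0 := ex_elem lt1.
have y0 := ex_elem lt.
rewrite (nth_map v0) //.
have [a1 a2 a3] := al_w_nth (t := tenm_fun (CF2 X Y) (CidH (CFo Z)) (CF2_fun t)) w0 y0 lt.
have [b1 b2 b3] := al_w_nth v0 y0 lt.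
apply: TElt_ext => /=.
- by rewrite a1 b1.
- by rewrite a2 b2 /= SF_fibm // -size_ty.
rewrite a3 b3 /al_zmask /= map_id; congr mask.
apply/eq_in_map => j; rewrite mem_iota add0n /= => jl.
by rewrite SF_am // -(al_size_z t).
Qed.

Lemma CollF_opmon : is_opmonoidal CollF.
Proof.
constructor.
- by move=> X; apply: CHom_ext.
- by move=> X Y Z f g; apply: CHom_ext.
- by move=> X X' Y Y' f g; apply: CHom_ext => t; apply: TElt_ext.
- move=> X Y Z; apply: CHom_ext => t /=; apply: TElt_ext => //=.
    by rewrite SF_comp //; exact: al_e.
  exact: om_alpha_list.
- move=> X; apply: CHom_ext => t /=.
  have x0 := lam_fun t.
  by rewrite (lam_nth t x0) (lam_nth (tenm_fun CF0 (CidH (CFo X)) (CF2_fun t)) x0) /= map_id.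
- move=> X; apply: CHom_ext => x /=; apply: TElt_ext => //=.
    by rewrite SF_id.
  apply: CU_list_ext.
  transitivity (map (sfo F) (map sval (rho_seq (bd X x)))); first by rewrite -!map_comp.
  rewrite !rho_sval SF_ar /mkseq -map_comp; apply/eq_in_map => i.
  rewrite mem_iota add0n /= => lt.
  by rewrite -SF_id SF_fib // (ax_cod_id (ocax C)).
Qed.
End SF.

Lemma CollF_id (C : OpCat) : CollF (idSF C) = idOpMon (Coll C).
Proof.
have Hfm : @CFm C C (idSF C) = (fun X Y (f : CHom X Y) => f).
  apply: functional_extensionality_dep => X; apply: functional_extensionality_dep => Y.
  by apply: functional_extensionality => f; apply: CHom_ext.
have Hf2 : @CF2 C C (idSF C) = (fun X Y => CidH (ten X Y)).
  apply: functional_extensionality_dep => X; apply: functional_extensionality_dep => Y.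
  by apply: CHom_ext => t; apply: TElt_ext.
have Hf0 : @CF0 C C (idSF C) = CidH (CU C).
  by apply: CHom_ext => u; apply: sig_ext.
by rewrite /CollF Hfm Hf2 Hf0.
Qed.

Lemma CollF_comp (C D E : OpCat) (F : SOpFun C D) (G : SOpFun D E) :
  CollF (compSF G F) = compOpMon (CollF G) (CollF F).
Proof.
have Hfm : @CFm C E (compSF G F) = (fun X Y (f : CHom X Y) => CFm G (CFm F f)).
  apply: functional_extensionality_dep => X; apply: functional_extensionality_dep => Y.
  by apply: functional_extensionality => f; apply: CHom_ext.
have Hf2 : @CF2 C E (compSF G F) =
   (fun X Y => CcompH (CF2 G (CFo F X) (CFo F Y)) (CFm G (CF2 F X Y))).
  apply: functional_extensionality_dep => X; apply: functional_extensionality_dep => Y.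
  by apply: CHom_ext => t; apply: TElt_ext.
have Hf0 : @CF0 C E (compSF G F) = CcompH (CF0 G) (CFm G (CF0 F)).
  by apply: CHom_ext => u; apply: sig_ext.
by rewrite /CollF Hfm Hf2 Hf0.
Qed.


Section Genuine.
Variable C : OpCat.
Local Notation A := (ocax C).

Definition UTspec (c : Ob C) (f : Arr C) : Prop :=
  dom f = c /\ is_trivial (cod f) /\
  forall g, dom g = c -> is_trivial (cod g) -> g = f.

Definition UT : Prop := forall c : Ob C, exists f, UTspec c f.

Lemma genuine_UT : genuine C -> UT.
Proof.
move=> G c; case: (G c) => u [cu tu uniq term].
case: (term c cu) => f [[df cf] funiq].
exists f; split => //; rewrite cf; split => // g dg tg.
have cg : cod g = u.
  apply: uniq tg; rewrite -dg; exact: conn_arr.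
by symmetry; apply: funiq.
Qed.

Lemma UT_conn (ut : UT) a b : connected a b ->
  forall fa fb, UTspec a fa -> UTspec b fb -> cod fa = cod fb.
Proof.
elim=> {a b}.
- by move=> c fa fb [_ [_ ha]] [db [tb _]]; rewrite (ha fb).
- move=> h fa fb [da [ta ha]] [db [tb hb]].
  have e : cod h = dom fb by [].
  have -> : fa = comp fb h.
    symmetry; apply: ha; first by rewrite (ax_dom_comp A (esym db)).
    by rewrite (ax_cod_comp A (esym db)).
  by rewrite (ax_cod_comp A (esym db)).
- by move=> a b _ IH fa fb sa sb; symmetry; apply: IH.
- move=> a b c _ IH1 _ IH2 fa fc sa sc.
  case: (ut b) => fb sb.
  by rewrite (IH1 _ _ sa sb) (IH2 _ _ sb sc).
Qed.

Lemma triv_spec (ut : UT) u : is_trivial u -> UTspec u (idA u).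
Proof.
move=> tu; case: (ut u) => f [df [tf hf]].
split; first exact: (ax_dom_id A).
split; first by rewrite (ax_cod_id A).
move=> g dg tg; rewrite (hf g dg tg); symmetry; apply: hf.
- exact: (ax_dom_id A).
- by rewrite (ax_cod_id A).
Qed.

Lemma UT_genuine : UT -> genuine C.
Proof.
move=> ut c; case: (ut c) => f sf; have [df [tf hf]] := sf.
exists (cod f); split => //.
- rewrite -{1}df; exact: conn_arr.
- move=> u' cu' tu'.
  have := UT_conn ut cu' sf (triv_spec ut tu').
  by rewrite (ax_cod_id A).
- move=> c' cc'; case: (ut c') => f' sf'; have [df' [tf' hf']] := sf'.
  have e := UT_conn ut cc' sf' (triv_spec ut tf).
  rewrite (ax_cod_id A) in e.
  exists f'; split => // g [dg cg]; symmetry; apply: hf' => //.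
  by rewrite cg.
Qed.

Lemma mk_fib (X : CObj C) (x : car X) (f : Arr C) :
  dom f = bd X x -> is_trivial (cod f) -> map (bd X) [:: x] = mkseq (fib f) (ar (cod f)).
Proof.
move=> e [h1 [h2 _]]; rewrite h1 /mkseq /= (h2 f erefl) e //.
Qed.

Definition mkTE (X : CObj C) (x : car X) (f : Arr C) (e : dom f = bd X x)
  (tr : is_trivial (cod f)) : TElt (CU C) X :=
  @TE C (CU C) X (exist _ (cod f) tr) f [:: x] erefl (mk_fib e tr).

Lemma lam_inv_UT : lambda_invertible (Coll C) -> UT.
Proof.
move=> li c.
pose X : CObj C := CO unit (fun _ => c).
case: (li X) => g [h1 h2].
pose t := hfun g tt.
have dt : dom (tphi t) = c := hbd g tt.
have tt' : is_trivial (cod (tphi t)) by rewrite -(tcod t); exact: svalP.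
exists (tphi t); split => //; split => // g' dg' tg'.
pose t' := @mkTE X tt g' dg' tg'.
have E := f_equal (fun h : CHom (ten (CU C) X) (ten (CU C) X) => hfun h t') h1; simpl in E.
have -> : g' = tphi t' by [].
rewrite -E.
by case: (lam_fun t').
Qed.

Section Inv.
Variable ut : forall c : Ob C, {f : Arr C | UTspec c f}.

Definition linv_fun (X : CObj C) (x : car X) : TElt (CU C) X :=
  @mkTE X x (sval (ut (bd X x))) (proj1 (svalP (ut (bd X x))))
    (proj1 (proj2 (svalP (ut (bd X x))))).

Definition linv (X : CObj C) : CHom X (ten (CU C) X) :=
  @CH C X (ten (CU C) X) (@linv_fun X) (fun x => proj1 (svalP (ut (bd X x)))).

Lemma linv_iso (X : CObj C) : is_iso (slam (s:=Coll C) X).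
Proof.
exists (linv X); split; apply: CHom_ext => /=.
- move=> t.
  have x0 := lam_fun t.
  have tr : is_trivial (cod (tphi t)) by rewrite -(tcod t); exact: svalP.
  have s1 : size (ty t) = 1 by rewrite size_ty; case: tr => ->.
  have ety : ty t = [:: lam_fun t].
    by rewrite (lam_nth t x0); case: (ty t) s1 => [|a [|b l]].
  have eb : bd X (lam_fun t) = dom (tphi t) := lam_bd t.
  have ef : sval (ut (bd X (lam_fun t))) = tphi t.
    have [_ [_ h]] := svalP (ut (bd X (lam_fun t))).
    by symmetry; apply: h.
  apply: TElt_ext => /=.
  + by apply: sig_ext => /=; rewrite ef -(tcod t).
  + exact: ef.
  + by rewrite ety.
- by move=> x; rewrite (lam_nth _ x).
Qed.
End Inv.

Lemma UT_lam_inv : UT -> lambda_invertible (Coll C).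
Proof.
move=> ut.
have ut' : forall c, {f : Arr C | UTspec c f}.
  by move=> c; apply: constructive_indefinite_description; exact: ut.
exact: linv_iso ut'.
Qed.

Lemma genuine_iff : genuine C <-> lambda_invertible (Coll C).
Proof.
split => [/genuine_UT|/lam_inv_UT]; [exact: UT_lam_inv|exact: UT_genuine].
Qed.
End Genuine.


Theorem theorem5p1 :
  (* each Coll_C(Set) is a skew monoidal category (an object of SkewMonCat) *)
  (forall C : OpCat, is_skew_monoidal (Coll C)) /\
  (* there is a functor Coll : OpCat -> SkewMonCat with object part C |-> Coll_C(Set) *)
  (exists CollF : forall (C D : OpCat), SOpFun C D -> OpMonData (Coll C) (Coll D),
     [/\ (forall (C D : OpCat) (F : SOpFun C D), is_opmonoidal (CollF C D F)),
         (forall C : OpCat, CollF C C (idSF C) = idOpMon (Coll C)) &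
         (forall (C D E : OpCat) (F : SOpFun C D) (G : SOpFun D E),
            CollF C E (compSF G F) = compOpMon (CollF D E G) (CollF C D F))]) /\
  (* genuine iff the left unit constraint of Coll_C(Set) is invertible *)
  (forall C : OpCat, genuine C <-> lambda_invertible (Coll C)).
Proof.
split; first exact: skew_Coll.
split; last exact: genuine_iff.
exists (fun C D F => @CollF C D F); split.
- move=> C D F; exact: CollF_opmon.
- move=> C; exact: CollF_id.
- move=> C D E F G; exact: CollF_comp.
Qed.
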